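(* Let $A$ be a finite nonempty set, $F\subseteq\mathrm{Op}(A)$ and $Q\subseteq\mathrm{gQuord}(A)$. Then (i) $\mathrm{gQuord}(A,F)=\mathrm{gQuord}(A,\mathrm{trl}(F))$; (ii) $\mathrm{Pol}\,Q=(\mathrm{End}\,Q)^{*}$; in particular $(\mathrm{End}\,Q)^{*}$ is a clone and $\mathrm{End}\,Q$ is u-closed.
   Context: $\mathrm{Op}(A)$ is the set of all operations on $A$ of positive finite arity. An operation preserves a relation $\rho\subseteq A^m$ if applying it componentwise to tuples of $\rho$ yields a tuple of $\rho$. $\mathrm{Pol}\,Q$ (resp. $\mathrm{End}\,Q$) is the set of all operations (resp. unary maps) preserving every relation in $Q$. A translation of an $n$-ary $f$ is a unary map $x\mapsto f(a_1,\dots,a_{i-1},x,a_{i+1},\dots,a_n)$ with fixed $a_j\in A$; $\mathrm{trl}(f)$ is the set of translations of $f$ ($\mathrm{trl}(f)=\{f\}$ for unary $f$), $\mathrm{trl}(F)=\bigcup_{f\in F}\mathrm{trl}(f)$, and $M^*:=\{f\in\mathrm{Op}(A)\mid\mathrm{trl}(f)\subseteq M\}$ for $M\subseteq A^A$. A relation $\rho\subseteq A^m$ is a generalized quasiorder if it is reflexive and transitive in the sense: for every $m\times m$-matrix over $A$ whose rows and columns all lie in $\rho$, its diagonal lies in $\rho$. $\mathrm{gQuord}(A)$ is the set of all generalized quasiorders on $A$, and $\mathrm{gQuord}(A,F)$ is the set of those preserved by all $f\in F$. For $M\subseteq A^A$, the u-closure $\overline{M}$ is the intersection of all monoids $N$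 with $M\subseteq N\le A^A$ such that $N^*$ is a clone; a monoid $M$ is u-closed if $\overline{M}=M$. *)

(* Defs.v *)
From mathcomp Require Import all_boot.
Set Implicit Arguments. Unset Strict Implicit. Unset Printing Implicit Defensive.

(* An operation on A of positive finite arity (arity f).+1. *)
Record op (A : Type) := Op { arity : nat; opfun : ('I_arity.+1 -> A) -> A }.

Record relation (A : Type) := Rel { rarity : nat; rmem : ('I_rarity -> A) -> Prop }.
Arguments rmem {A} r _.
Arguments opfun {A} o _.
Arguments Op {A} arity opfun.

Section Defs.
Variable A : finType.

Definition preserves (f : op A) (rho : relation A) : Prop :=
  forall r : 'I_(arity f).+1 -> ('I_(rarity rho) -> A),
    (forall k, rmem rho (r k)) -> rmem rho (fun i => opfun f (fun k => r k i)).

Definition preservesU (g : A -> A) (rho : relation A) : Prop :=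
  forall r, rmem rho r -> rmem rho (fun i => g (r i)).

Definition Pol (Q : relation A -> Prop) (f : op A) : Prop :=
  forall rho, Q rho -> preserves f rho.

Definition End (Q : relation A -> Prop) (g : A -> A) : Prop :=
  forall rho, Q rho -> preservesU g rho.

Definition upd n (a : 'I_n -> A) (i : 'I_n) (x : A) : 'I_n -> A :=
  fun j => if j == i then x else a j.

Definition is_translation (f : op A) (g : A -> A) : Prop :=
  exists (i : 'I_(arity f).+1) (a : 'I_(arity f).+1 -> A),
    forall x, g x = opfun f (upd a i x).

Definition trl (F : op A -> Prop) (g : A -> A) : Prop :=
  exists f, F f /\ is_translation f g.

Definition star (M : (A -> A) -> Prop) (f : op A) : Prop :=
  forall g, is_translation f g -> M g.

Definition reflexive_rel (rho : relation A) : Prop :=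
  forall a : A, rmem rho (fun _ => a).

Definition transitive_rel (rho : relation A) : Prop :=
  forall M : 'I_(rarity rho) -> 'I_(rarity rho) -> A,
    (forall i, rmem rho (fun j => M i j)) ->
    (forall j, rmem rho (fun i => M i j)) ->
    rmem rho (fun i => M i i).

Definition gquord (rho : relation A) : Prop := reflexive_rel rho /\ transitive_rel rho.

Definition gQuordF (F : op A -> Prop) (rho : relation A) : Prop :=
  gquord rho /\ forall f, F f -> preserves f rho.

Definition gQuordU (G : (A -> A) -> Prop) (rho : relation A) : Prop :=
  gquord rho /\ forall g, G g -> preservesU g rho.

Definition clone (C : op A -> Prop) : Prop :=
  (forall n (i : 'I_n.+1), C (@Op A n (fun x => x i))) /\
  (forall (f : op A) m (gs : 'I_(arity f).+1 -> ('I_m.+1 -> A) -> A),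
     C f -> (forall k, C (@Op A m (gs k))) ->
     C (@Op A m (fun x => opfun f (fun k => gs k x)))).

Definition monoid (M : (A -> A) -> Prop) : Prop :=
  M (fun x => x) /\ forall g h, M g -> M h -> M (fun x => g (h x)).

Definition u_closure (M : (A -> A) -> Prop) (g : A -> A) : Prop :=
  forall N, monoid N -> (forall h, M h -> N h) -> clone (star N) -> N g.

Definition u_closed (M : (A -> A) -> Prop) : Prop :=
  monoid M /\ forall g, u_closure M g <-> M g.

End Defs.

(* Main.v *)
From Stdlib Require Import FunctionalExtensionality.
Require Import Defs.
From mathcomp Require Import all_boot.

Lemma trans_pres (A : finType) (x0 : A) (f : op A) (rho : relation A) :
  gquord rho -> (forall g, is_translation f g -> preservesU g rho) -> preserves f rho.
Proof.
move=> [Hrefl Htr] Htrl r Hr.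
pose v k i (a : 'I_(arity f).+1 -> A) :=
  fun l : 'I_(arity f).+1 => if (l < k)%N then r l i else a l.
have key: forall k, k <= (arity f).+1 -> forall a,
    rmem rho (fun i => opfun f (v k i a)).
  elim=> [|k IH] Hk a.
    have ->: (fun i => opfun f (v 0 i a)) = fun _ => opfun f a.
      apply: functional_extensionality => i; congr (opfun f).
    exact: Hrefl.
  have Hk' : k < (arity f).+1 by [].
  pose k' := Ordinal Hk'.
  pose M i j := opfun f (v k i (upd a k' (r k' j))).
  have := Htr M.
  have ->: (fun i => M i i) = (fun i => opfun f (v k.+1 i a)).
    apply: functional_extensionality => i; rewrite /M; congr (opfun f).
    apply: functional_extensionality => l; rewrite /v /upd.
    have -> : (l == k') = (nat_of_ord l == k) by [].
    case: (ltngtP l k) => H.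
    - by rewrite ltnS (ltnW H).
    - by rewrite ltnNge H.
    - by rewrite H ltnSn; congr (r _ i); apply: val_inj; rewrite /= H.
  apply.
    move=> i.
    have ->: (fun j => M i j) = fun j => opfun f (upd (v k i a) k' (r k' j)).
      apply: functional_extensionality => j; rewrite /M; congr (opfun f).
      apply: functional_extensionality => l; rewrite /v /upd.
      have -> : (l == k') = (nat_of_ord l == k) by [].
      case: eqP => [->|_]; first by rewrite ltnn.
      by [].
    apply: (Htrl (fun x => opfun f (upd (v k i a) k' x))); last exact: Hr.
    by exists k', (v k i a).
  move=> j; exact: (IH (ltnW Hk)).
have := key _ (leqnn _) (fun _ => x0).
congr (rmem rho); apply: functional_extensionality => i; congr (opfun f).
by apply: functional_extensionality => l; rewrite /v ltn_ord.
Qed.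

Lemma pres_trans (A : finType) (f : op A) (rho : relation A) :
  gquord rho -> preserves f rho -> forall g, is_translation f g -> preservesU g rho.
Proof.
move=> [Hrefl _] Hf g [i [a Hg]] r Hr.
have := Hf (fun k => if k == i then r else fun _ => a k).
have ->: (fun j => opfun f (fun k => (if k == i then r else fun _ => a k) j))
        = (fun j => g (r j)).
  apply: functional_extensionality => j; rewrite Hg; congr (opfun f).
  apply: functional_extensionality => l; rewrite /upd.
  by case: (l == i).
apply=> k; case: (k == i) => //; exact: Hrefl.
Qed.

Arguments pres_trans {A f rho}.
Arguments trans_pres {A} x0 {f rho}.

Theorem corollary3p8 (A : finType) (HA : 0 < #|A|)
  (F : op A -> Prop) (Q : relation A -> Prop)
  (HQ : forall rho, Q rho -> gquord rho) :
  (forall rho, gQuordF F rho <-> gQuordU (trl F) rho) /\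
  (forall f, Pol Q f <-> star (End Q) f) /\
  clone (star (End Q)) /\
  u_closed (End Q).
Proof.
have x0 : A := enum_val (Ordinal HA).
have PS : forall f, Pol Q f <-> star (End Q) f.
  move=> f; split.
    move=> Hf g Hg rho Hrho; exact: (pres_trans (HQ _ Hrho) (Hf _ Hrho) _ Hg).
  move=> Hf rho Hrho; apply: (trans_pres x0 (HQ _ Hrho)) => g Hg.
  exact: Hf.
have CL : clone (star (End Q)).
  split.
    move=> n i; apply/PS => rho _ r Hr /=; exact: Hr.
  move=> f m gs /PS Hf Hgs; apply/PS => rho Hrho r Hr /=.
  apply: (Hf rho Hrho (fun k => fun i => gs k (fun l => r l i))) => k.
  exact: (proj2 (PS _) (Hgs k) rho Hrho r Hr).
split.
  move=> rho; split.
    move=> [Hg HF]; split => // g [f [Ff Hfg]].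
    exact: (pres_trans Hg (HF f Ff)).
  move=> [Hg HF]; split => // f Ff.
  apply: (trans_pres x0 Hg) => g Hfg; apply: HF; by exists f.
split => //; split => //.
have MO : monoid (End Q).
  split; first by move=> rho _ r Hr.
  move=> g h Hg Hh rho Hrho r Hr; exact: (Hg _ Hrho _ (Hh _ Hrho _ Hr)).
split => // g; split.
  by move=> H; apply: H.
by move=> Hg N _ HN _; apply: HN.
Qed.
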